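(* Let $D$ denote the set of variable network games $(v,\rho)\in\mathbb V^N\times\mathbb P^N$ such that $v$ is component additive. Then: (i) the Expected Myerson Value $\Psi^m$ is an allocation rule on the class of variable network games which, on $D$, satisfies component balance and the balanced contributions property; and (ii) if $\Psi\colon\mathbb V^N\times\mathbb P^N\to\mathbb R^N$ is any allocation rule on the class of variable network games satisfying component balance and the balanced contributions property for all $(v,\rho)\in D$, then $\Psi(v,\rho)=\Psi^m(v,\rho)$ for all $(v,\rho)\in D$. That is, $\Psi^m$ is the unique allocation rule on the class of component additive variable network games that satisfies component balance and the balanced contributions property.
   Context: $N=\{1,\dots,n\}$ is a finite player set. A link is an unordered pair $ij=\{i,j\}$ of distinct players; $g_N$ is the set of all links; a network is any $g\subseteq g_N$; $\mathbb G^N$ is the set of all networks. For $g\in\mathbb G^N$: $N_i(g)=\{j\ne i: ij\in g\}$, $L_i(g)=\{ij\in g\}$, $N(g)=\bigcup_i N_i(g)$, and $N_0(g)=N\setminus N(g)$ (isolated players). For $S\subseteq N$, $g|S=\{ij\in g: i,j\in S\}$. A component of $g$ is a nonempty subnetwork $h\subseteq g$ that is connected (any two players of $N(h)$ are joined by a path in $h$) and maximal (if $i\in N(h)$ and $ij\in g$ then $ij\in h$); $C(g)$ is the set of components of $g$. A network formation probability distribution is a map $\rho\colon\mathbb G^N\to[0,1]$ with $\sum_g\rho(g)=1$; $\mathbb P^N$ is the set of these. $\mathbb G(\rho)=\{g:\rho(g)>0\}$, and the extent is $g(\rho)=\bigcup_{g\in\mathbb G(\rho)}g$. For a network $g$,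 the restriction $\rho_g\in\mathbb P^N$ is $\rho_g(h)=\sum_{h'\subseteq g_N\setminus g}\rho(h\cup h')$ if $h\subseteq g$ and $\rho_g(h)=0$ otherwise. For a player $i$, $\rho^{-i}=\rho_{g_N\setminus L_i(g_N)}$. A network game is $v\colon\mathbb G^N\to\mathbb R$ with $v(\varnothing)=0$; $\mathbb V^N$ is the set of these. $v$ is component additive if $v(g)=\sum_{h\in C(g)}v(h)$ for all $g$. A variable network game is a pair $(v,\rho)\in\mathbb V^N\times\mathbb P^N$. An allocation rule on the class of variable network games is a map $\Psi\colon\mathbb V^N\times\mathbb P^N\to\mathbb R^N$ with $\Psi_i(v,\rho)=0$ for every $i\in N_0(g(\rho))$. It is component balanced (on $(v,\rho)$ with $v$ component additive) if for every $h\in C(g(\rho))$: $\sum_{i\in N(h)}\Psi_i(v,\rho)=\sum_{g\in\mathbb G(\rho)}\rho(g)\,v(g\cap h)$. It satisfies the balanced contributions property if for all players $i\ne j$: $\Psi_i(v,\rho)-\Psi_i(v,\rho^{-j})=\Psi_j(v,\rho)-\Psi_j(v,\rho^{-i})$. The Myerson Value for network games is $Y^m_i(v,g)=\sum_{S\subseteq N\setminus\{i\}}\frac{\#S!\,(n-\#S-1)!}{n!}\,[v(g|(S\cup\{i\}))-v(g|S)]$. The Expected Myerson Value is $\Psi^m(v,\rho)=\sum_{g\in\mathbb G^N}\rho(g)\,Y^m(v,g)$. *)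

(* Defs.v *)
From HB Require Import structures.
From mathcomp Require Import all_boot all_order all_algebra.
From mathcomp Require Import reals.
Set Implicit Arguments. Unset Strict Implicit. Unset Printing Implicit Defensive.
Import Order.TTheory GRing.Theory Num.Theory.
Local Open Scope ring_scope.

Section Networks.
Variable n : nat.

Definition link := {e : {set 'I_n} | #|e| == 2%N}.
(* a network is any set of links; g_N = [set: link] *)
Definition network := {set link}.

Definition Lset (i : 'I_n) (g : network) : network := [set e in g | i \in val e].
Definition Nbr (i : 'I_n) (g : network) : {set 'I_n} :=
  [set j | (j != i) && [exists e in g, val e == [set i; j]]].
Definition Nset (g : network) : {set 'I_n} := \bigcup_i Nbr i g.
Definition N0 (g : network) : {set 'I_n} := ~: Nset g.
Definition restrN (g : network) (S : {set 'I_n}) : network :=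
  [set e in g | val e \subset S].

Definition adj (h : network) : rel 'I_n :=
  fun i j => [exists e in h, val e == [set i; j]] && (i != j).
Definition connectedN (h : network) : bool :=
  [forall i in Nset h, forall j in Nset h, connect (adj h) i j].
Definition maximalIn (g h : network) : bool :=
  [forall i in Nset h, forall e in g, (i \in val e) ==> (e \in h)].
Definition is_component (g h : network) : bool :=
  [&& h \subset g, h != set0, connectedN h & maximalIn g h].

Variable R : realType.

Definition ngame := {ffun network -> R}.
Definition pdist := {ffun network -> R}.

Definition is_network_game (v : ngame) : Prop := v set0 = 0.
Definition is_prob (rho : pdist) : Prop :=
  (forall g, 0 <= rho g <= 1) /\ \sum_g rho g = 1.

Definition component_additive (v : ngame) : Prop :=
  forall g, v g = \sum_(h | is_component g h) v h.

Definition extent (rho : pdist) : network := \bigcup_(g | 0 < rho g) g.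

Definition restrP (rho : pdist) (g : network) : pdist :=
  [ffun h : network => if h \subset g then \sum_(h' : network | h' \subset ~: g) rho (h :|: h')
             else 0].
Definition rho_minus (rho : pdist) (i : 'I_n) : pdist :=
  restrP rho (~: Lset i [set: link]).

Definition alloc := ngame -> pdist -> 'I_n -> R.

Definition is_alloc_rule (Psi : alloc) : Prop :=
  forall v rho, is_network_game v -> is_prob rho ->
    forall i, i \in N0 (extent rho) -> Psi v rho i = 0.

Definition component_balanced (Psi : alloc) (v : ngame) (rho : pdist) : Prop :=
  forall h, is_component (extent rho) h ->
    \sum_(i in Nset h) Psi v rho i = \sum_(g | 0 < rho g) rho g * v (g :&: h).

Definition balanced_contributions (Psi : alloc) (v : ngame) (rho : pdist) : Prop :=
  forall i j : 'I_n, i != j ->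
    Psi v rho i - Psi v (rho_minus rho j) i = Psi v rho j - Psi v (rho_minus rho i) j.

Definition myerson (v : ngame) (g : network) (i : 'I_n) : R :=
  \sum_(S : {set 'I_n} | i \notin S)
    ((#|S|`! * (n - #|S| - 1)`!)%:R / (n`!)%:R) *
    (v (restrN g (i |: S)) - v (restrN g S)).

Definition exp_myerson : alloc :=
  fun v rho i => \sum_(g : network) rho g * myerson v g i.

Definition inD (v : ngame) (rho : pdist) : Prop :=
  [/\ is_network_game v, is_prob rho & component_additive v].

End Networks.

(* Main.v *)
Require Import Defs.
Set Warnings "-notation-overridden,-ambiguous-paths".
From mathcomp Require Import all_boot all_order all_algebra.
From mathcomp Require Import reals ring zify lra.
Import Order.TTheory GRing.Theory Num.Theory.
Set Implicit Arguments. Unset Strict Implicit. Unset Printing Implicit Defensive.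
Section Shap.
Variable n : nat.
Variable R : realType.
Local Open Scope ring_scope.
Definition wt (k : nat) : R := ((k`! * (n - k - 1)`!)%N%:R / (n`!)%:R).
Implicit Types (u : {set 'I_n} -> R).
Definition sh u (i : 'I_n) : R :=
  \sum_(S : {set 'I_n} | i \notin S) wt #|S| * (u (i |: S) - u S).

Lemma myerson_sh v g i : @myerson n R v g i = sh (fun S => v (restrN g S)) i.
Proof. by []. Qed.

Lemma sum_addj (j : 'I_n) (P : pred {set 'I_n}) (F : {set 'I_n} -> R) :
  \sum_(S : {set 'I_n} | (j \in S) && P S) F S = \sum_(S : {set 'I_n} | (j \notin S) && P (j |: S)) F (j |: S).
Proof.
rewrite (reindex_onto (fun S => j |: S) (fun S => S :\ j)) /=; last first.
  by move=> S /andP[jS _]; rewrite setD1K.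
apply: eq_bigl => S; rewrite setU11 /=.
case: (boolP (j \in S)) => jS /=.
  apply/negbTE; apply/negP => /andP[_ /eqP E].
  have: j \in (j |: S) :\ j by rewrite E.
  by rewrite setD11.
by rewrite setU1K // eqxx andbT.
Qed.

Lemma sum_exch (Q : 'I_n -> {set 'I_n} -> bool) (F : {set 'I_n} -> R) :
  \sum_(i : 'I_n) \sum_(T : {set 'I_n} | Q i T) F T = \sum_(T : {set 'I_n}) F T *+ #|[pred i | Q i T]|.
Proof.
under eq_bigr do rewrite big_mkcond.
rewrite exchange_big; apply: eq_bigr => T _.
by rewrite -big_mkcond /= -sumr_const.
Qed.

Lemma nfact_neq0 : (n`!)%:R != 0 :> R.
Proof. by rewrite pnatr_eq0 -lt0n fact_gt0. Qed.
Lemma wt_coef k : (k <= n)%N ->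
  wt k.-1 *+ k - wt k *+ (n - k) = (k == n)%:R - (k == 0%N)%:R.
Proof.
move=> kn; rewrite /wt -(mulr_natr _ k) -(mulr_natr _ (n - k)).
rewrite ![_ / _ * _]mulrAC -!natrM.
have nf := nfact_neq0.
case: k kn => [|k] kn.
  rewrite muln0 mul0r sub0r eqxx subn0 fact0 mul1n.
  case: n nf kn => [|m] nf _; first by rewrite muln0 mul0r oppr0 subrr.
  by rewrite subn1 /= mulnC -factS mulfV // sub0r.
have h1 : ((k.+1.-1)`! * (n - k.+1.-1 - 1)`! * k.+1 = (k.+1)`! * (n - k.+1)`!)%N.
  by rewrite factS /= (_ : (n - k - 1 = n - k.+1)%N); [ring|lia].
rewrite h1.
case: (ltngtP k.+1 n) => [lt|lt|eq].
- have [m Hm] : exists m, (n - k.+1 = m.+1)%N by exists (n - k.+1).-1; rewrite prednK // subn_gt0.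
  rewrite Hm subn1 /= -mulnA [(m`! * _)%N]mulnC -factS subrr /=.
  by rewrite subrr.
- by move: lt; rewrite ltnNge kn.
- rewrite -eq subnn muln0 mul0r subr0 fact0 muln1 mulfV /=; first by rewrite subr0.
  by rewrite eq.
Qed.
Lemma sh_eff u : \sum_(i : 'I_n) sh u i = u setT - u set0.
Proof.
have E1 (i : 'I_n) : sh u i = \sum_(T : {set 'I_n} | i \in T) wt (#|T|.-1) * u T
                   - \sum_(S : {set 'I_n} | i \notin S) wt #|S| * u S.
  rewrite /sh; under eq_bigr do rewrite mulrBr.
  rewrite sumrB; congr (_ - _).
  transitivity (\sum_(T : {set 'I_n} | (i \in T) && predT T) wt (#|T|.-1) * u T); last first.
    by apply: eq_bigl => T; rewrite andbT.
  rewrite sum_addj; symmetry; apply: eq_big => S; first by rewrite andbT.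
  by move=> /andP[iS _]; rewrite cardsU1 iS.
under eq_bigr do rewrite E1.
rewrite sumrB !sum_exch -sumrB.
have -> : \sum_(T : {set 'I_n}) ((wt #|T|.-1 * u T) *+ #|[pred i | i \in T]| -
                  (wt #|T| * u T) *+ #|[pred i | i \notin T]|)
        = \sum_(T : {set 'I_n}) u T * ((T == setT)%:R - (T == set0)%:R).
  apply: eq_bigr => T _.
  have c1 : #|[pred i | i \in T]| = #|T| by apply: eq_card.
  have c2 : #|[pred i | i \notin T]| = (n - #|T|)%N.
    have h := cardsC T; rewrite card_ord in h.
    have -> : #|[pred i | i \notin T]| = #|~: T| by apply: eq_card => x; rewrite !inE.
    lia.
  rewrite c1 c2 -(mulrnAl (wt #|T|.-1)) -(mulrnAl (wt #|T|)) -mulrBl mulrC.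
  have hT : (#|T| <= n)%N by have := subset_leq_card (subsetT T); rewrite cardsT card_ord.
  rewrite wt_coef //.
  have -> : (#|T| == n) = (T == setT).
    by rewrite eqEcard subsetT /= cardsT card_ord eqn_leq hT.
  by rewrite cards_eq0.
rewrite (eq_bigr (fun T => u T * (T == setT)%:R - u T * (T == set0)%:R)); last first.
  by move=> T _; rewrite mulrBr.
rewrite sumrB; congr (_ - _).
  rewrite (bigD1 setT) //= eqxx mulr1 big1 ?addr0 // => T /negbTE ->; by rewrite mulr0.
rewrite (bigD1 set0) //= eqxx mulr1 big1 ?addr0 // => T /negbTE ->; by rewrite mulr0.
Qed.


Lemma sh_null u i : (forall S, u (i |: S) = u S) -> sh u i = 0.
Proof. by move=> H; apply: big1 => S _; rewrite H subrr mulr0. Qed.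

Lemma sh_add u1 u2 i : sh (fun S => u1 S + u2 S) i = sh u1 i + sh u2 i.
Proof.
rewrite /sh -big_split; apply: eq_bigr => S _ /=.
by rewrite -mulrDr opprD addrACA.
Qed.

Lemma setD1_nin (A : {set 'I_n}) x : x \notin A -> A :\ x = A.
Proof.
move=> xA; apply/setP => y; rewrite !inE.
by case: eqP => // ->; rewrite (negbTE xA).
Qed.

Lemma sum_addj' (j : 'I_n) (P : pred {set 'I_n}) (F : {set 'I_n} -> R) :
  \sum_(S : {set 'I_n} | P S && (j \in S)) F S =
  \sum_(S : {set 'I_n} | P (j |: S) && (j \notin S)) F (j |: S).
Proof.
rewrite (eq_bigl (fun S : {set 'I_n} => (j \in S) && P S)); last by move=> S; rewrite andbC.
by rewrite sum_addj; apply: eq_bigl => S; rewrite andbC.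
Qed.

Lemma sh_bc_aux u i j : i != j ->
  sh u i - sh (fun S => u (S :\ j)) i =
  \sum_(S : {set 'I_n} | (i \notin S) && (j \notin S))
     wt #|S|.+1 * (u (i |: (j |: S)) - u (j |: S) - u (i |: S) + u S).
Proof.
move=> ij; rewrite /sh.
rewrite (bigID (fun S : {set 'I_n} => j \in S)) /= [X in _ - X](bigID (fun S : {set 'I_n} => j \in S)) /=.
have pe S : (i \notin j |: S) && (j \notin S) = (i \notin S) && (j \notin S).
  by rewrite in_setU1 (negbTE ij).
rewrite !sum_addj'.
have eA1 : \sum_(S : {set 'I_n} | (i \notin j |: S) && (j \notin S))
      wt #|j |: S| * (u (i |: (j |: S)) - u (j |: S)) =
    \sum_(S : {set 'I_n} | (i \notin S) && (j \notin S))
      wt #|S|.+1 * (u (i |: (j |: S)) - u (j |: S)).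
  by apply: eq_big => S; [exact: pe | move=> /andP[_ jS]; rewrite cardsU1 jS].
have eB1 : \sum_(S : {set 'I_n} | (i \notin j |: S) && (j \notin S))
      wt #|j |: S| * (u ((i |: (j |: S)) :\ j) - u ((j |: S) :\ j)) =
    \sum_(S : {set 'I_n} | (i \notin S) && (j \notin S))
      wt #|S|.+1 * (u (i |: S) - u S).
  apply: eq_big => S; first exact: pe.
  move=> /andP[_ jS]; rewrite cardsU1 jS setUCA !setU1K //.
  by rewrite in_setU1 eq_sym (negbTE ij).
have eB2 : \sum_(S : {set 'I_n} | (i \notin S) && ~~ (j \in S))
      wt #|S| * (u ((i |: S) :\ j) - u (S :\ j)) =
    \sum_(S : {set 'I_n} | (i \notin S) && ~~ (j \in S))
      wt #|S| * (u (i |: S) - u S).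
  apply: eq_bigr => S /andP[_ jS]; rewrite !setD1_nin //.
  by rewrite in_setU1 eq_sym (negbTE ij).
rewrite eA1 eB1 eB2 opprD addrACA subrr addr0 -sumrB.
by apply: eq_bigr => S _; rewrite -mulrBr; congr (_ * _); ring.
Qed.

Lemma sh_bc u i j : i != j ->
  sh u i - sh (fun S => u (S :\ j)) i = sh u j - sh (fun S => u (S :\ i)) j.
Proof.
move=> ij; rewrite !sh_bc_aux // 1?eq_sym //.
apply: eq_big => S; first by rewrite andbC.
by move=> _; rewrite setUCA; congr (_ * _); ring.
Qed.

End Shap.


Section Graph.
Variable n : nat.
Local Notation network := (network n).
Local Notation link := (link n).

Lemma link2 (e : link) : exists x y, x != y /\ val e = [set x; y].
Proof. exact/cards2P/(valP e). Qed.

Lemma link_mem (e : link) : exists x, x \in val e.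
Proof. by have [x [y [_ ->]]] := link2 e; exists x; rewrite !inE eqxx. Qed.

Lemma NsetP (g : network) x :
  reflect (exists2 e, e \in g & x \in val e) (x \in Nset g).
Proof.
apply: (iffP bigcupP).
  move=> [i _]; rewrite inE => /andP[_ /existsP[e /andP[eg /eqP ev]]].
  by exists e => //; rewrite ev !inE eqxx orbT.
move=> [e eg xe]; have [a [b [ab ev]]] := link2 e.
move: xe; rewrite ev !inE => /orP[/eqP xa|/eqP xb].
  exists b => //; rewrite inE xa ab /=.
  by apply/existsP; exists e; rewrite eg ev setUC eqxx.
exists a => //; rewrite inE xb eq_sym ab /=.
by apply/existsP; exists e; rewrite eg ev eqxx.
Qed.

Lemma adjP (h : network) x y :
  reflect (x != y /\ exists2 e, e \in h & val e = [set x; y]) (adj h x y).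
Proof.
rewrite /adj; apply: (iffP andP).
  by move=> [/existsP[e /andP[eh /eqP ev]] xy]; split=> //; exists e.
by move=> [xy [e eh ev]]; split=> //; apply/existsP; exists e; rewrite eh ev eqxx.
Qed.

Lemma maximalP (g h : network) :
  reflect (forall i e, i \in Nset h -> e \in g -> i \in val e -> e \in h) (maximalIn g h).
Proof.
apply: (iffP forallP).
  move=> H i e ih eg ie; move: (H i); rewrite ih /= => /forallP /(_ e).
  by rewrite eg ie.
move=> H i; apply/implyP => ih; apply/forallP => e; apply/implyP => eg; apply/implyP.
exact: H.
Qed.

Lemma connectedP (h : network) :
  reflect (forall i j, i \in Nset h -> j \in Nset h -> connect (adj h) i j) (connectedN h).
Proof.
apply: (iffP forallP).
  move=> H i j ih jh; move: (H i); rewrite ih /= => /forallP /(_ j).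
  by rewrite jh.
move=> H i; apply/implyP => ih; apply/forallP => j; apply/implyP => jh.
exact: H.
Qed.

Lemma conn_inv (e : rel 'I_n) (a : pred 'I_n) :
  (forall x y, e x y -> a x = a y) -> forall x y, connect e x y -> a x = a y.
Proof.
move=> H x y /connectP[p pp ->]; elim: p x pp => [|z p IH] x //= /andP[exz pz].
by rewrite (H _ _ exz) IH.
Qed.

Definition noncross (k : network) (T : {set 'I_n}) :=
  forall e, e \in k -> (val e \subset T) || (val e \subset ~: T).

Lemma noncrossC (k : network) T : noncross k T -> noncross k (~: T).
Proof. by move=> H e /H; rewrite setCK orbC. Qed.

Lemma noncross_sub (k k' : network) T : k' \subset k -> noncross k T -> noncross k' T.
Proof. by move=> /subsetP sk H e /sk /H. Qed.

Lemma sub_both (e : link) (T : {set 'I_n}) : val e \subset T -> val e \subset ~: T -> False.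
Proof.
move=> /subsetP h1 /subsetP h2; have [x xe] := link_mem e.
by move: (h1 x xe) (h2 x xe); rewrite inE => ->.
Qed.

Lemma restrN_sub (g : network) S : restrN g S \subset g.
Proof. by apply/subsetP => e; rewrite inE => /andP[]. Qed.

Lemma restrN_restrN (g : network) A B : restrN (restrN g A) B = restrN g (A :&: B).
Proof. by apply/setP => e; rewrite !inE subsetI andbA. Qed.

Lemma comp_F1 (k c : network) T : is_component k c -> noncross k T ->
  ~~ (c \subset restrN k T) -> c \subset restrN k (~: T).
Proof.
move=> /and4P[ck c0 /connectedP cc _] nk /subsetPn[e1 e1c].
have e1k : e1 \in k by apply: (subsetP ck).
rewrite inE e1k /= => e1T.
have e1T' : val e1 \subset ~: T by move: (nk e1 e1k); rewrite (negbTE e1T).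
have [x xe1] := link_mem e1.
apply/subsetP => e2 e2c; have e2k : e2 \in k by apply: (subsetP ck).
rewrite inE e2k /=; case/orP: (nk e2 e2k) => // e2T.
have [y ye2] := link_mem e2.
have xc : x \in Nset c by apply/NsetP; exists e1.
have yc : y \in Nset c by apply/NsetP; exists e2.
have key : (x \in T) = (y \in T).
  apply: (@conn_inv (adj c) (fun z => z \in T) _ x y (cc x y xc yc)).
  move=> a b /adjP[_ [e ec ev]].
  have ek : e \in k by apply: (subsetP ck).
  have ae : a \in val e by rewrite ev !inE eqxx.
  have be : b \in val e by rewrite ev !inE eqxx orbT.
  case/orP: (nk e ek) => /subsetP H.
    by rewrite (H a ae) (H b be).
  by move: (H a ae) (H b be); rewrite !inE => /negbTE -> /negbTE ->.
move: key; have -> : (y \in T) = true by apply: (subsetP e2T).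
by move: (subsetP e1T' x xe1); rewrite inE => /negbTE ->.
Qed.


Lemma comp_F2 (k c : network) T : is_component k c -> c \subset restrN k T ->
  is_component (restrN k T) c.
Proof.
move=> /and4P[ck c0 cc /maximalP cm] cT; apply/and4P; split=> //.
apply/maximalP => i e ic; rewrite inE => /andP[ek _]; exact: cm.
Qed.

Lemma comp_F3 (k c : network) T : is_component (restrN k T) c -> noncross k T ->
  is_component k c /\ c \subset restrN k T.
Proof.
move=> /and4P[cT c0 cc /maximalP cm] nk; split=> //; apply/and4P; split=> //.
  exact: subset_trans cT (restrN_sub _ _).
apply/maximalP => i e ic ek ie.
have [e' e'c ie'] := NsetP _ _ ic.
have iT : i \in T.
  by move: (subsetP cT e' e'c); rewrite inE => /andP[_ /subsetP]; apply.
apply: (cm i e ic _ ie); rewrite inE ek /=.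
case/orP: (nk e ek) => // /subsetP H.
by move: (H i ie); rewrite inE iT.
Qed.

Variable R : realType.
Local Open Scope ring_scope.

Lemma split_cadd (v : ngame n R) (k : network) T :
  component_additive v -> noncross k T ->
  v k = v (restrN k T) + v (restrN k (~: T)).
Proof.
move=> Hv nk; rewrite {1}Hv (Hv (restrN k T)) (Hv (restrN k (~: T))).
rewrite (bigID (fun c : network => c \subset restrN k T)) /=.
congr (_ + _); apply: eq_bigl => c.
  apply/idP/idP; first by move=> /andP[]; exact: comp_F2.
  by move=> H; have [-> ->] := comp_F3 H nk.
apply/idP/idP.
  move=> /andP[kc H]; apply: comp_F2 => //; exact: comp_F1 nk H.
move=> H; have [kc cT] := comp_F3 H (noncrossC nk); rewrite kc /=.
apply/negP => cT'.
move: kc => /and4P[_ c0 _ _]; have [e ec] := set0Pn _ c0.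
move: (subsetP cT e ec) (subsetP cT' e ec); rewrite !inE => /andP[_ h1] /andP[_ h2].
exact: sub_both h2 h1.
Qed.

End Graph.


Section Comp.
Variable n : nat.
Variable R : realType.
Local Open Scope ring_scope.

Lemma myerson_comp (v : ngame n R) (E g h : network n) :
  component_additive v -> v set0 = 0 -> g \subset E -> is_component E h ->
  \sum_(i in Nset h) myerson v g i = v (g :&: h).
Proof.
move=> Hv Hv0 gE hc.
have hmax := hc; move: hmax => /and4P[hE _ _ /maximalP hmax].
set T := Nset h.
have ncE : noncross E T.
  move=> e eE; case: (boolP (val e \subset ~: T)) => [H|]; first by apply/orP; right.
  move=> /subsetPn [x xe]; rewrite inE negbK => xT.
  have eh : e \in h by apply: (hmax x e xT eE xe).
  by apply/orP; left; apply/subsetP => y ye; apply/NsetP; exists e.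
have ncg S : noncross (restrN g S) T.
  exact: noncross_sub (subset_trans (restrN_sub g S) gE) ncE.
have Hu S : v (restrN g S) = v (restrN g (S :&: T)) + v (restrN g (S :&: ~: T)).
  by rewrite (split_cadd Hv (ncg S)) !restrN_restrN.
pose u1 S := v (restrN g (S :&: T)).
pose u2 S := v (restrN g (S :&: ~: T)).
have Hsh i : myerson v g i = sh u1 i + sh u2 i.
  rewrite myerson_sh -sh_add /sh; apply: eq_bigr => S _ /=.
  by rewrite (Hu (i |: S)) (Hu S).
have u2null i : i \in T -> sh u2 i = 0.
  move=> iT; apply: sh_null => S; rewrite /u2; congr (v (restrN g _)).
  apply/setP => x; rewrite !inE; case: (eqVneq x i) => [->|] /=; by rewrite ?iT ?andbF.
have u1null i : i \notin T -> sh u1 i = 0.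
  move=> iT; apply: sh_null => S; rewrite /u1; congr (v (restrN g _)).
  apply/setP => x; rewrite !inE; case: (eqVneq x i) => [->|] /=; by rewrite ?(negbTE iT) ?andbF.
rewrite (eq_bigr (fun i => sh u1 i)); last by move=> i iT; rewrite Hsh u2null ?addr0.
transitivity (\sum_i sh u1 i).
  rewrite [RHS](bigID (fun i => i \in T)) /= [X in _ = _ + X]big1 ?addr0 //.
rewrite sh_eff /u1 setTI set0I.
have -> : restrN g set0 = set0.
  apply/setP => e; rewrite !inE; apply/negP => /andP[_ /subsetP H].
  by have [x xe] := link_mem e; move: (H x xe); rewrite inE.
rewrite Hv0 subr0; congr (v _); apply/setP => e; rewrite !inE.
case eg: (e \in g) => //=; apply/idP/idP.
  move=> /subsetP H; have [x xe] := link_mem e.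
  by apply: (hmax x e (H x xe) (subsetP gE e eg) xe).
by move=> eh; apply/subsetP => y ye; apply/NsetP; exists e.
Qed.

End Comp.

Section Prob.
Variable n : nat.
Variable R : realType.
Local Open Scope ring_scope.
Local Notation network := (network n).

Lemma restrP_sum (rho : pdist n R) (G0 : network) (F : network -> R) :
  \sum_h restrP rho G0 h * F h = \sum_g rho g * F (g :&: G0).
Proof.
rewrite (bigID (fun h : network => h \subset G0)) /= [X in _ + X]big1 ?addr0; last first.
  by move=> h /negbTE hG; rewrite ffunE hG mul0r.
rewrite [RHS](partition_big (fun g : network => g :&: G0) (fun h => h \subset G0)) /=; last first.
  by move=> g _; apply: subsetIr.
apply: eq_bigr => h hG; rewrite ffunE hG big_distrl /=.
rewrite [RHS](eq_bigr (fun g => rho g * F h)); last by move=> g /eqP ->.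
rewrite [RHS](reindex_onto (fun h' => h :|: h') (fun g => g :&: ~: G0)) /=; last first.
  by move=> g /eqP <-; rewrite -setIUr setUCr setIT.
apply: eq_bigl => h'; apply/idP/idP.
  move=> hG'; have d1 : h' :&: G0 = set0.
    by apply/eqP; rewrite setI_eq0 disjoints_subset.
  have d2 : h :&: ~: G0 = set0.
    by apply/eqP; rewrite setI_eq0 disjoints_subset setCK.
  by rewrite !setIUl (setIidPl hG) (setIidPl hG') d1 d2 setU0 set0U !eqxx.
by move=> /andP[_ /eqP <-]; rewrite subsetIr.
Qed.

Lemma rho_minus_sum (rho : pdist n R) j (F : network -> R) :
  \sum_h rho_minus rho j h * F h = \sum_g rho g * F (g :&: ~: Lset j setT).
Proof. exact: restrP_sum. Qed.

Lemma restrN_minus (g : network) j S :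
  restrN (g :&: ~: Lset j setT) S = restrN g (S :\ j).
Proof.
apply/setP => e; rewrite !inE subsetD1.
by case: (e \in g) => //=; rewrite andbC.
Qed.

Lemma myerson_minus (v : ngame n R) g j i :
  myerson v (g :&: ~: Lset j setT) i = sh (fun S => v (restrN g (S :\ j))) i.
Proof. by rewrite myerson_sh; apply: eq_bigr => S _; rewrite !restrN_minus. Qed.

Lemma prob_minus (rho : pdist n R) j : is_prob rho -> is_prob (rho_minus rho j).
Proof.
move=> [H1 H2].
have ge0 h : 0 <= rho_minus rho j h.
  rewrite /rho_minus ffunE; case: ifP => // _.
  by apply: sumr_ge0 => g _; case/andP: (H1 (h :|: g)).
have s1 : \sum_h rho_minus rho j h = 1.
  transitivity (\sum_h rho_minus rho j h * 1); first by apply: eq_bigr => h _; rewrite mulr1.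
  by rewrite (rho_minus_sum rho j (fun _ => 1)) /=; under eq_bigr do rewrite mulr1.
split=> // h; rewrite ge0 /= -s1 (bigD1 h) //= lerDl.
by apply: sumr_ge0.
Qed.

Lemma sub_extent (rho : pdist n R) g : 0 < rho g -> g \subset extent rho.
Proof. by move=> pos; rewrite /extent (bigcup_sup g). Qed.

Lemma extent_minus (rho : pdist n R) j : is_prob rho ->
  extent (rho_minus rho j) \subset extent rho :&: ~: Lset j setT.
Proof.
move=> [H1 _]; apply/subsetP => e /bigcupP [h hpos eh].
move: hpos; rewrite /rho_minus ffunE; case: ifP => hG pos; last by rewrite ltxx in pos.
rewrite inE (subsetP hG e eh) andbT.
case: (pickP (fun h' : network => (h' \subset ~: ~: Lset j setT) && (0 < rho (h :|: h')))).
  move=> h' /andP[_ p']; apply/bigcupP; exists (h :|: h') => //.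
  by rewrite inE eh.
move=> none; move: pos; rewrite big1 ?ltxx // => h' hh'.
move: (none h'); rewrite hh' /= => /negbT; rewrite -leNgt => le0.
by apply/eqP; rewrite eq_le le0; case/andP: (H1 (h :|: h')).
Qed.

Lemma extent_lt (rho : pdist n R) j : is_prob rho -> j \in Nset (extent rho) ->
  (#|extent (rho_minus rho j)| < #|extent rho|)%N.
Proof.
move=> hp jE; apply: (leq_ltn_trans (subset_leq_card (extent_minus j hp))).
apply: proper_card; apply/properP; split; first exact: subsetIl.
have [e eE je] := NsetP _ _ jE; exists e => //.
by rewrite !inE negb_and negbK je orbT.
Qed.

Lemma inD_minus (v : ngame n R) rho j : inD v rho -> inD v (rho_minus rho j).
Proof. by case=> a b c; split => //; exact: prob_minus. Qed.

End Prob.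

Section Exist.
Variable n : nat.
Local Notation network := (network n).

Lemma adj_link (g : network) e x y : e \in g -> x \in val e -> y \in val e -> x != y ->
  adj g x y.
Proof.
move=> eg xe ye xy; apply/adjP; split=> //; exists e => //.
have [a [b [ab ev]]] := link2 e.
move: xy xe ye; rewrite ev !inE => xy /orP[/eqP xv|/eqP xv] /orP[/eqP yv|/eqP yv]; subst x y.
- by rewrite eqxx in xy.
- by [].
- by rewrite setUC.
- by rewrite eqxx in xy.
Qed.

Lemma adj_sym (g : network) : symmetric (adj g).
Proof. by move=> x y; rewrite /adj setUC eq_sym. Qed.

Lemma Nset_sub (h g : network) : h \subset g -> Nset h \subset Nset g.
Proof.
move=> hg; apply/subsetP => x /NsetP[e eh xe]; apply/NsetP; exists e => //.
exact: (subsetP hg).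
Qed.

Lemma comp_exists (E : network) i : i \in Nset E ->
  exists2 h, is_component E h & i \in Nset h.
Proof.
move=> iE.
pose h : network := [set e in E | [exists x in val e, connect (adj E) i x]].
have hE : h \subset E by apply/subsetP => e; rewrite inE => /andP[].
have key y : connect (adj E) i y -> connect (adj h) i y.
  move=> /connectP[p pp ->].
  suff H : forall x, connect (adj E) i x -> connect (adj h) i x ->
      path (adj E) x p -> connect (adj h) i (last x p).
    by apply: H => //; exact: connect0.
  elim: p {pp} => [|z p IH] x cE ch //= /andP[axz pz].
  have cEz : connect (adj E) i z by apply: connect_trans cE (connect1 axz).
  apply: IH pz => //; apply: (connect_trans ch); apply: connect1.
  move: axz => /adjP[xz [e eE ev]].
  apply: (@adj_link h e) => //; last by rewrite ev !inE eqxx orbT.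
    by rewrite inE eE; apply/existsP; exists x; rewrite ev !inE eqxx cE.
  by rewrite ev !inE eqxx.
have conn_h a : a \in Nset h -> connect (adj E) i a.
  move=> /NsetP[e]; rewrite inE => /andP[eE /existsP[x /andP[xe cx]]] ae.
  case: (eqVneq x a) => [<-//|xa].
  by apply: connect_trans cx (connect1 (adj_link eE xe ae xa)).
have [e0 e0E ie0] := NsetP _ _ iE.
have e0h : e0 \in h by rewrite inE e0E; apply/existsP; exists i; rewrite ie0 connect0.
exists h; last by apply/NsetP; exists e0.
apply/and4P; split=> //.
- by apply/set0Pn; exists e0.
- apply/connectedP => a b ah bh.
  have csym := sym_connect_sym (adj_sym h).
  apply: (connect_trans (y := i)); last by apply: key; apply: conn_h.
  by rewrite csym; apply: key; apply: conn_h.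
- apply/maximalP => a e ah eE ae; rewrite inE eE; apply/existsP; exists a.
  by rewrite ae conn_h.
Qed.

End Exist.

Section Final.
Variable n : nat.
Variable R : realType.
Local Open Scope ring_scope.

Lemma rho0 (rho : pdist n R) g : (forall g, 0 <= rho g <= 1) -> ~~ (0 < rho g) -> rho g = 0.
Proof.
move=> H1 np; case/andP: (H1 g) => g0 _.
by apply/eqP; rewrite eq_le g0 andbT leNgt.
Qed.

Lemma em_alloc : is_alloc_rule (@exp_myerson n R).
Proof.
move=> v rho hv [H1 H2] i; rewrite inE => iE.
rewrite /exp_myerson big1 // => g _.
have [pos|np] := boolP (0 < rho g); last by rewrite (rho0 H1 np) mul0r.
rewrite myerson_sh sh_null ?mulr0 // => S; congr (v _).
apply/setP => e; rewrite !inE; case eg: (e \in g) => //=.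
have ie : i \notin val e.
  apply/negP => ie; apply: (negP iE); apply/NsetP; exists e => //.
  exact: (subsetP (sub_extent pos)).
apply/idP/idP => H; last exact: subset_trans H (subsetUr _ _).
apply/subsetP => x xe; move: (subsetP H x xe); rewrite in_setU1 => /orP[/eqP xi|//].
by move: xe; rewrite xi (negbTE ie).
Qed.

Lemma em_cb (v : ngame n R) rho : inD v rho -> component_balanced (@exp_myerson n R) v rho.
Proof.
move=> [hv [H1 H2] hca] h hc; rewrite /exp_myerson exchange_big /=.
rewrite (bigID (fun g => 0 < rho g)) /= [X in _ + X]big1 ?addr0; last first.
  by move=> g np; rewrite (rho0 H1 np) big1 // => i _; rewrite mul0r.
apply: eq_bigr => g pos; rewrite -mulr_sumr (myerson_comp hca hv (sub_extent pos) hc).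
by [].
Qed.

Lemma em_bc (v : ngame n R) rho : balanced_contributions (@exp_myerson n R) v rho.
Proof.
move=> i j ij; rewrite /exp_myerson !rho_minus_sum -!sumrB; apply: eq_bigr => g _.
rewrite -!mulrBr !myerson_minus !myerson_sh; congr (_ * _).
exact: (sh_bc (fun S => v (restrN g S)) ij).
Qed.

End Final.

Theorem mainTheorem2 (n : nat) (R : realType) :
  (is_alloc_rule (@exp_myerson n R) /\
   (forall v rho, inD v rho ->
      component_balanced (@exp_myerson n R) v rho /\
      balanced_contributions (@exp_myerson n R) v rho)) /\
  (forall Psi : alloc n R,
     is_alloc_rule Psi ->
     (forall v rho, inD v rho ->
        component_balanced Psi v rho /\ balanced_contributions Psi v rho) ->
     forall v rho, inD v rho -> forall i, Psi v rho i = exp_myerson v rho i).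
Proof.
split.
  split; first exact: em_alloc.
  by move=> v rho hD; split; [exact: em_cb | exact: em_bc].
move=> Psi HA HD v.
suff H : forall m rho, (#|extent rho| < m)%N -> inD v rho ->
    forall i, Psi v rho i = exp_myerson v rho i.
  by move=> rho hD i; exact: (H _ rho (ltnSn _) hD i).
elim=> [//|m IH] rho hm hD' i.
have [hv hp hca] := hD'.
case: (boolP (i \in Nset (extent rho))) => iE; last first.
  have iN : i \in N0 (extent rho) by rewrite inE iE.
  by rewrite (HA v rho hv hp i iN) (em_alloc hv hp iN).
have [h hc ih] := comp_exists iE.
have hsub : Nset h \subset Nset (extent rho) by apply: Nset_sub; case/and4P: hc.
have ltm k : k \in Nset (extent rho) -> (#|extent (rho_minus rho k)| < m)%N.
  by move=> kE; apply: leq_trans (extent_lt hp kE) _; rewrite -ltnS.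
have Dj j : j \in Nset h ->
    (Psi v rho j - exp_myerson v rho j = Psi v rho i - exp_myerson v rho i)%R.
  move=> jh; case: (eqVneq j i) => [->//|ji].
  have jE := subsetP hsub j jh.
  have bp := (HD v rho hD').2 j i ji.
  have be := em_bc v rho ji.
  rewrite (IH _ (ltm i iE) (inD_minus i hD') j) (IH _ (ltm j jE) (inD_minus j hD') i) in bp.
  lra.
have cb := (HD v rho hD').1 h hc.
have ce := em_cb hD' hc.
have : (\sum_(j in Nset h) (Psi v rho j - exp_myerson v rho j) = 0)%R.
  by rewrite sumrB cb ce subrr.
rewrite (eq_bigr _ Dj) sumr_const => /eqP; rewrite mulrn_eq0 => /orP[|/eqP d].
  by rewrite cards_eq0 => /eqP h0; rewrite h0 inE in ih.
by apply/eqP; rewrite -subr_eq0 d.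
Qed.
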